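(* Let $n\ge 3$ and let $S$ be a double-$n$ string with diameter $d<n/2$, whose symbols are labeled $1,\dots,n$ in the order of their first occurrence in $S$. For $1\le i\le d+1$, let $r_i$ be the number of symbols $j\neq i$ such that each of the two occurrences of $j$ lies at position-distance at most $d$ from some occurrence of $i$. Then $r_i \le 3d+i-n$.
   Context: A double-$n$ string is a string of length $2n$ over an alphabet of $n$ symbols in which each symbol appears exactly twice. Positions in the string are numbered $1,\dots,2n$; the position-distance between two entries is the absolute difference of their positions. The distance between two distinct symbols is the minimum position-distance between an occurrence of the first and an occurrence of the second. The diameter of a double-$n$ string is the maximum of the distance over all pairs of distinct symbols. *)

(* Defs.v *)
From mathcomp Require Import all_boot.
Set Implicit Arguments. Unset Strict Implicit. Unset Printing Implicit Defensive.

(* A string of length 2n over symbols 'I_n; positions are 0-indexed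
   (0..2n-1), which does not affect position-distances. *)
Definition dstring (n : nat) := 'I_(2 * n) -> 'I_n.

Definition posdist (p q : nat) : nat := (p - q) + (q - p).

Definition is_double (n : nat) (s : dstring n) : Prop :=
  forall a : 'I_n, #|[pred p | s p == a]| = 2.

Definition sdist (n : nat) (s : dstring n) (a b : 'I_n) : nat :=
  \big[minn/(2 * n)]_(p | s p == a) \big[minn/(2 * n)]_(q | s q == b)
     posdist p q.

Definition diameter (n : nat) (s : dstring n) : nat :=
  \max_(a : 'I_n) \max_(b : 'I_n | b != a) sdist s a b.

Definition first_occ_labelled (n : nat) (s : dstring n) : Prop :=
  forall (a b : 'I_n), a < b ->
    forall q : 'I_(2 * n), s q == b -> exists p : 'I_(2 * n), p < q /\ s p == a.

Definition rcount (n : nat) (s : dstring n) (d : nat) (i : 'I_n) : nat :=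
  #|[pred j : 'I_n | (j != i) &&
      [forall q, (s q == j) ==> [exists p, (s p == i) && (posdist p q <= d)]]]|.

(* Main.v *)
Require Import Defs.
From mathcomp Require Import all_boot zify.

Lemma sdist_le_diam n (s : dstring n) (a b : 'I_n) : b != a -> sdist s a b <= diameter s.
Proof.
move=> ba; rewrite /diameter.
apply: (leq_trans _ (leq_bigmax_cond a isT)).
exact: (@leq_bigmax_cond _ (fun b => b != a) (fun b => sdist s a b) b ba).
Qed.
Arguments sdist_le_diam {n s a b}.

Lemma card_partn m n (f : 'I_m -> 'I_n) (W : pred 'I_m) :
  #|W| = \sum_(j : 'I_n) #|[pred q | W q && (f q == j)]|.
Proof.
rewrite -sum1_card (partition_big f xpredT) //=.
apply: eq_bigr => j _; rewrite -sum1_card; apply: eq_bigl => q; by rewrite !inE.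
Qed.

Lemma card_le_seq m (A : pred 'I_m) (l0 l : seq nat) :
  uniq l0 -> (forall q : 'I_m, A q -> val q \notin l0) ->
  {subset l0 <= l} -> (forall q : 'I_m, A q -> val q \in l) ->
  size l0 + #|A| <= size l.
Proof.
move=> u0 dis s0 sA.
rewrite cardE -(size_map val) -size_cat; apply: uniq_leq_size.
  rewrite cat_uniq u0 map_inj_uniq ?enum_uniq //=; last exact: val_inj.
  rewrite andbT; apply/hasPn => x /mapP [q]; rewrite mem_enum => qA ->; exact: dis.
move=> x; rewrite mem_cat => /orP [/s0 //|/mapP [q]]; rewrite mem_enum => qA ->; exact: sA.
Qed.
Lemma occ_other n (s : dstring n) (a : 'I_n) (p q r : 'I_(2 * n)) :
  is_double s -> s p = a -> s q = a -> p != q -> s r = a -> r = p \/ r = q.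
Proof.
move=> Hd sp sq pq sr.
case: (eqVneq r p) => [->|rp]; first by left.
case: (eqVneq r q) => [->|rq]; first by right.
exfalso.
have := Hd a; rewrite (cardD1 p) (cardD1 q) (cardD1 r) !inE sp sq sr eqxx.
rewrite eq_sym pq rp rq /=. lia.
Qed.
Arguments occ_other {n s a p q r}.

Lemma sdist_wit n (s : dstring n) (a b : 'I_n) d : d < 2 * n -> sdist s a b <= d ->
  exists p q, [/\ s p = a, s q = b & posdist p q <= d].
Proof.
move=> dn.
case E: [exists p, [exists q, (s p == a) && (s q == b) && (posdist p q <= d)]].
  move=> _; case/existsP: E => p /existsP [q /andP [/andP [/eqP ? /eqP ?] ?]].
  by exists p, q.
move/negbT: E => /existsPn E.
rewrite leqNgt => /negP; case.
rewrite /sdist; apply: (big_ind (fun x => d < x)) => //.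
  by move=> x y; rewrite leq_min => -> ->.
move=> p /eqP sp.
apply: (big_ind (fun x => d < x)) => //.
  by move=> x y; rewrite leq_min => -> ->.
move=> q /eqP sq.
have := E p; move/existsPn/(_ q); rewrite sp sq !eqxx /=; by rewrite ltnNge.
Qed.
Arguments sdist_wit {n s a b d}.
Lemma norepeat n (s : dstring n) d (p q : 'I_(2 * n)) :
  is_double s -> diameter s = d -> 2 * d < n ->
  p != q -> p <= d -> q <= d -> s p = s q -> False.
Proof.
move=> Hdb Hdiam Hdn pq pd qd spq.
pose A' := [pred x : 'I_(2 * n) | (x <= 2 * d) && (x != q)].
have cA : 1 + #|A'| <= size (iota 0 (2 * d).+1).
  apply: (@card_le_seq _ A' [:: val q]) => //.
  - move=> x /andP [_ xq]; rewrite inE; apply/negP => /eqP xq'; move/negP: xq; apply.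
    by apply/eqP/val_inj.
    by move=> x; rewrite !inE => /eqP ->; rewrite mem_iota /=; lia.
    by move=> x /andP [x2 _]; rewrite mem_iota /=; lia.
rewrite size_iota in cA.
have cI : #|s @: A'| <= 2 * d.
  apply: (leq_trans (leq_imset_card _ _)). by move: cA; rewrite add1n ltnS.
have : 0 < #|~: (s @: A')| by have := cardsC (s @: A'); rewrite card_ord; lia.
case/card_gt0P => b; rewrite inE => bnot.
have bx : forall x : 'I_(2 * n), x <= 2 * d -> s x != b.
  move=> x x2; case: (eqVneq x q) => [->|xq].
    rewrite -spq; apply/eqP => e; move/negP: bnot; apply; rewrite -e.
    apply: imset_f; rewrite inE; apply/andP; split => //; lia.
  apply/eqP => e; move/negP: bnot; apply; rewrite -e.
  by apply: imset_f; rewrite inE x2.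
have bp : b != s p by rewrite eq_sym; apply: bx; lia.
have := @sdist_le_diam _ s _ _ bp; rewrite Hdiam => sd.
have [p' [q' [sp' sq' pd']]] := sdist_wit (ltac:(lia) : d < 2 * n) sd.
have := occ_other Hdb (erefl (s p)) (esym spq) pq sp'.
have q2 : 2 * d < q'.
  rewrite ltnNge; apply/negP => q2; have := bx q' q2; by rewrite sq' eqxx.
move: pd'; rewrite /posdist => pd'; case=> e; rewrite e in pd'; lia.
Qed.
Arguments norepeat {n s d p q}.

Lemma label n (s : dstring n) d :
  is_double s -> first_occ_labelled s -> diameter s = d -> 2 * d < n ->
  forall k : 'I_(2 * n), k <= d -> (s k : nat) = k.
Proof.
move=> Hdb Hfo Hdiam Hdn.
suff H : forall m (k : 'I_(2 * n)), k < m -> k <= d -> (s k : nat) = k.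
  by move=> k; apply: H (ltnSn k).
elim=> [//|m IH] k km kd.
case: (ltnP k m) => [kl|mk]; first exact: IH.
case: (ltngtP (s k) k) => // [lt|gt].
  have alt : (s k : nat) < 2 * n by have := ltn_ord k; lia.
  pose a' := Ordinal alt.
  have e : (s a' : nat) = s k by rewrite IH /=; lia.
  exfalso; apply: (norepeat Hdb Hdiam Hdn (p := a') (q := k)).
  - by apply/eqP => /(congr1 val) /=; lia.
  - rewrite /=; lia.
  - done.
  - exact: val_inj.
have kn : (k : nat) < n by lia.
pose kk := Ordinal kn.
have [p [pk /eqP spk]] := Hfo kk (s k) gt k (eqxx _).
have := IH p (ltac:(lia)) (ltac:(lia)); rewrite spk /=; lia.
Qed.
Arguments label {n s d}.

Lemma sum_bool_card m (P : pred 'I_m) : \sum_(j : 'I_m) (P j : nat) = #|P|.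
Proof. by rewrite -sum1_card [RHS]big_mkcond /=; apply: eq_bigr => j _; rewrite unfold_in; case: (P j). Qed.

(* symbols 'I_n are 0-indexed: label k stands for symbol k+1 of the paper *)
Theorem lemma3p4 (n : nat) (s : dstring n) (d : nat) (i : 'I_n) :
  3 <= n -> is_double s -> first_occ_labelled s ->
  diameter s = d -> 2 * d < n ->
  i < d.+1 ->
  rcount s d i + n <= 3 * d + i.+1.
Proof.
move=> H3 Hdb Hfo Hdiam Hdn Hi.
have dn2 : d < 2 * n by lia.
have ip_lt : (i : nat) < 2 * n by lia.
pose ip := Ordinal ip_lt.
have sip : s ip = i.
  apply: val_inj; rewrite /= (label Hdb Hfo Hdiam Hdn ip) //=.
have : 0 < #|[predD1 [pred p | s p == i] & ip]|.
  have := Hdb i; rewrite (cardD1 ip) inE sip eqxx /= add1n => -[->]. done.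
case/card_gt0P => p2; rewrite !inE => /andP [p2ip /eqP sp2].
pose W := [pred q : 'I_(2 * n) | (s q != i) && [exists p, (s p == i) && (posdist p q <= d)]].
have up : 2 + #|W| <= size (iota 0 (i + d).+1 ++ iota (p2 - d) (2 * d).+1).
  apply: (@card_le_seq _ W [:: val ip; val p2]).
  - rewrite /= inE andbT; apply/negP => /eqP e; move/negP: p2ip; apply.
    by apply/eqP/val_inj.
  - move=> q /andP [sq _]; rewrite !inE; apply/negP => /orP [] /eqP e;
      move/negP: sq; apply; apply/eqP.
      by rewrite (_ : q = ip) //; apply: val_inj.
    by rewrite (_ : q = p2) //; apply: val_inj.
  - move=> x; rewrite mem_seq2 => /orP [] /eqP ->; rewrite mem_cat !mem_iota; apply/orP; [left|right]; rewrite /=; lia.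
  - move=> q /andP [_ /existsP [p /andP [/eqP sp pq]]].
    rewrite mem_cat !mem_iota; move: pq; rewrite /posdist.
    case: (occ_other Hdb sip sp2 (ltac:(by rewrite eq_sym)) sp) => -> /= pq; apply/orP; [left|right]; lia.
rewrite size_cat !size_iota in up.
pose R := [pred j : 'I_n | (j != i) &&
      [forall q, (s q == j) ==> [exists p, (s p == i) && (posdist p q <= d)]]].
have lo : \sum_(j : 'I_n) ((j != i) + R j) <= #|W|.
  rewrite (@card_partn _ _ s W); apply: leq_sum => j _.
  case: (eqVneq j i) => [->|ji]; first by rewrite /= eqxx.
  have [p [q [sp sq pq]]] := @sdist_wit _ s i j d dn2
    (ltac:(rewrite -Hdiam; exact: sdist_le_diam ji)).
  have qW : q \in [pred q | W q && (s q == j)].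
    rewrite !inE sq eqxx andbT ji /=; apply/existsP; exists p; by rewrite sp eqxx.
  case Rj: (R j); rewrite /=.
    apply: (@leq_trans #|[pred q | s q == j]|); first by rewrite Hdb.
    apply: subset_leq_card; apply/subsetP => x; rewrite !inE => sx.
    rewrite sx andbT (eqP sx) ji /=.
    by move: Rj; rewrite /R inE ji /= => /forallP /(_ x); rewrite sx.
  by apply/card_gt0P; exists q.
have e0 : \sum_(j : 'I_n) (j != i : nat) = n.-1.
  by rewrite (@sum_bool_card _ (predC1 i)) cardC1 card_ord.
have e1 : \sum_(j : 'I_n) (R j : nat) = #|R| := @sum_bool_card _ R.
rewrite big_split e0 e1 in lo.
rewrite /rcount -/R; simpl in lo; lia.
Qed.
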